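(* Let $W$ be a finite-dimensional battery system with Hamiltonian $H_W$ and let $|0\rangle_W$ be an eigenvector of $H_W$. Suppose $\mathcal{T}$ is a Thermal Operation on $SW$ (with respect to $H_S\otimes\mathbb{I}+\mathbb{I}\otimes H_W$) such that $\mathcal{T}(\rho_S\otimes|0\rangle\langle0|_W)=\gamma_S\otimes\sigma_W$ for some state $\sigma_W$ with $[\sigma_W,H_W]=0$. Then also $\mathcal{T}(\mathcal{D}(\rho_S)\otimes|0\rangle\langle0|_W)=\gamma_S\otimes\sigma_W$.
   Context: $S$ is a finite-dimensional system with Hamiltonian $H_S$, $\beta>0$, $\gamma_S=e^{-\beta H_S}/\mathrm{tr}\,e^{-\beta H_S}$. A Thermal Operation on a system $X$ with Hamiltonian $H_X$ is a channel $\mathcal{T}(\rho)=\mathrm{tr}_B[U(\rho\otimes\gamma_B)U^\dagger]$ with $B$ any finite-dimensional system, $H_B$ any Hamiltonian, $\gamma_B=e^{-\beta H_B}/\mathrm{tr}\,e^{-\beta H_B}$, and $U$ unitary with $[U,H_X\otimes\mathbb{I}+\mathbb{I}\otimes H_B]=0$. $\mathcal{D}(\rho)=\lim_{s\to\infty}\frac1s\int_0^se^{-iH_St}\rho e^{iH_St}dt$ is the dephasing map on $S$. *)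

(* Defs.v *)
From Stdlib Require Import Reals Arith.
Open Scope R_scope.

Record Cplx := mkC { re : R ; im : R }.
Definition C0 : Cplx := mkC 0 0.
Definition C1 : Cplx := mkC 1 0.
Definition RtoC (r : R) : Cplx := mkC r 0.
Definition Cadd (a b : Cplx) : Cplx := mkC (re a + re b) (im a + im b).
Definition Copp (a : Cplx) : Cplx := mkC (- re a) (- im a).
Definition Cmul (a b : Cplx) : Cplx :=
  mkC (re a * re b - im a * im b) (re a * im b + im a * re b).
Definition Cconj (a : Cplx) : Cplx := mkC (re a) (- im a).

Fixpoint csum (n : nat) (f : nat -> Cplx) : Cplx :=
  match n with
  | O => C0
  | S m => Cadd (csum m f) (f m)
  end.

(* ---------- matrices: a d x d matrix is a function nat -> nat -> C whose
   entries with indices < d are the meaningful ones ---------- *)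
Definition Mat := nat -> nat -> Cplx.
Definition Vec := nat -> Cplx.

Definition meq (d : nat) (A B : Mat) : Prop :=
  forall i j, (i < d)%nat -> (j < d)%nat -> A i j = B i j.

Definition mI : Mat := fun i j => if Nat.eqb i j then C1 else C0.
Definition madd (A B : Mat) : Mat := fun i j => Cadd (A i j) (B i j).
Definition mscale (c : Cplx) (A : Mat) : Mat := fun i j => Cmul c (A i j).
Definition mmul (d : nat) (A B : Mat) : Mat :=
  fun i j => csum d (fun k => Cmul (A i k) (B k j)).
Definition madj (A : Mat) : Mat := fun i j => Cconj (A j i).
Definition mtrace (d : nat) (A : Mat) : Cplx := csum d (fun i => A i i).
Definition mapply (d : nat) (A : Mat) (v : Vec) : Vec :=
  fun i => csum d (fun k => Cmul (A i k) (v k)).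

Fixpoint mpow (d : nat) (A : Mat) (k : nat) : Mat :=
  match k with
  | O => mI
  | S m => mmul d (mpow d A m) A
  end.

(* Tensor product A (x) B, where B is dB x dB; the index of a basis vector
   |a> (x) |b> is a * dB + b. *)
Definition kron (dB : nat) (A B : Mat) : Mat :=
  fun i j => Cmul (A (i / dB)%nat (j / dB)%nat) (B (i mod dB)%nat (j mod dB)%nat).

Definition ptrace2 (dB : nat) (M : Mat) : Mat :=
  fun i j => csum dB (fun k => M (i * dB + k)%nat (j * dB + k)%nat).

Definition proj (v : Vec) : Mat := fun i j => Cmul (v i) (Cconj (v j)).

Definition hermitian (d : nat) (H : Mat) : Prop := meq d (madj H) H.
Definition unitary (d : nat) (U : Mat) : Prop :=
  meq d (mmul d U (madj U)) mI /\ meq d (mmul d (madj U) U) mI.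
Definition commutes (d : nat) (A B : Mat) : Prop :=
  meq d (mmul d A B) (mmul d B A).

Definition psd (d : nat) (A : Mat) : Prop :=
  forall v : Vec,
    0 <= re (csum d (fun i => csum d (fun j =>
                 Cmul (Cconj (v i)) (Cmul (A i j) (v j))))).

Definition density (d : nat) (rho : Mat) : Prop :=
  hermitian d rho /\ psd d rho /\ mtrace d rho = C1.

Definition exp_partial (d : nat) (A : Mat) (N : nat) : Mat :=
  fun i j => csum (S N) (fun k => Cmul (RtoC (/ INR (fact k))) (mpow d A k i j)).

Definition is_mexp (d : nat) (A E : Mat) : Prop :=
  forall i j, (i < d)%nat -> (j < d)%nat ->
    Un_cv (fun N => re (exp_partial d A N i j)) (re (E i j)) /\
    Un_cv (fun N => im (exp_partial d A N i j)) (im (E i j)).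

Definition is_gibbs (d : nat) (beta : R) (H gamma : Mat) : Prop :=
  exists E : Mat, is_mexp d (mscale (RtoC (- beta)) H) E /\
    meq d gamma (mscale (RtoC (/ re (mtrace d E))) E).

Definition thermal_op (dX : nat) (HX : Mat) (beta : R) (T : Mat -> Mat) : Prop :=
  exists (dB : nat) (HB gammaB U : Mat),
    (0 < dB)%nat /\ hermitian dB HB /\ is_gibbs dB beta HB gammaB /\
    unitary (dX * dB) U /\
    commutes (dX * dB) U (madd (kron dB HX mI) (kron dB mI HB)) /\
    forall rho : Mat,
      meq dX (T rho)
        (ptrace2 dB (mmul (dX * dB) (mmul (dX * dB) U (kron dB rho gammaB))
                                       (madj U))).

Definition time_avg_cv (g : R -> R) (l : R) : Prop :=
  forall eps, 0 < eps -> exists S, 0 < S /\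
    forall s, S <= s -> exists pr : Riemann_integrable g 0 s,
      Rabs (RiemannInt pr / s - l) < eps.

Definition is_dephased (d : nat) (H rho sigma : Mat) : Prop :=
  exists Ut : R -> Mat,
    (forall t, is_mexp d (mscale (mkC 0 (- t)) H) (Ut t)) /\
    forall i j, (i < d)%nat -> (j < d)%nat ->
      time_avg_cv (fun t => re (mmul d (mmul d (Ut t) rho) (madj (Ut t)) i j))
                  (re (sigma i j)) /\
      time_avg_cv (fun t => im (mmul d (mmul d (Ut t) rho) (madj (Ut t)) i j))
                  (im (sigma i j)).

(* Main.v *)
Require Import Defs.
From Stdlib Require Import Reals Arith.
From Stdlib Require Import Lia Lra Setoid Morphisms Ring FunctionalExtensionality.
Open Scope R_scope.
Notation C1 := Defs.C1.
Notation C0 := Defs.C0.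

Lemma Ceq : forall a b : Cplx, re a = re b -> im a = im b -> a = b.
Proof. intros [a1 a2] [b1 b2]; simpl; intros; subst; reflexivity. Qed.

Definition Csub a b := Cadd a (Copp b).

Lemma Cring_theory : ring_theory C0 C1 Cadd Cmul Csub Copp (@eq Cplx).
Proof.
  constructor; intros; apply Ceq; destruct x; try destruct y; try destruct z;
  unfold Cadd, Cmul, Csub, Copp, C0, C1; simpl; ring.
Qed.
Add Ring Cring : Cring_theory.

Lemma RtoC_mul a b : RtoC (a * b) = Cmul (RtoC a) (RtoC b).
Proof. apply Ceq; simpl; ring. Qed.
Lemma RtoC_add a b : RtoC (a + b) = Cadd (RtoC a) (RtoC b).
Proof. apply Ceq; simpl; ring. Qed.
Lemma RtoC_0 : RtoC 0 = C0. Proof. reflexivity. Qed.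
Lemma RtoC_1 : RtoC 1 = C1. Proof. reflexivity. Qed.

Lemma Cconj_mul a b : Cconj (Cmul a b) = Cmul (Cconj a) (Cconj b).
Proof. apply Ceq; simpl; ring. Qed.
Lemma Cconj_add a b : Cconj (Cadd a b) = Cadd (Cconj a) (Cconj b).
Proof. apply Ceq; simpl; ring. Qed.
Lemma Cconj_conj a : Cconj (Cconj a) = a.
Proof. apply Ceq; simpl; ring. Qed.
Lemma Cconj_0 : Cconj C0 = C0. Proof. apply Ceq; simpl; ring. Qed.
Lemma Cconj_1 : Cconj C1 = C1. Proof. apply Ceq; simpl; ring. Qed.
Lemma Cconj_RtoC r : Cconj (RtoC r) = RtoC r. Proof. apply Ceq; simpl; ring. Qed.

Lemma csum_ext n f g : (forall k, (k < n)%nat -> f k = g k) -> csum n f = csum n g.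
Proof.
  induction n; simpl; intros; auto.
  rewrite IHn by (intros; apply H; lia). rewrite H by lia. auto.
Qed.

Lemma csum_add n f g : csum n (fun k => Cadd (f k) (g k)) = Cadd (csum n f) (csum n g).
Proof. induction n; simpl. apply Ceq; simpl; ring. rewrite IHn; ring. Qed.

Lemma csum_mull n c f : csum n (fun k => Cmul c (f k)) = Cmul c (csum n f).
Proof. induction n; simpl. apply Ceq; simpl; ring. rewrite IHn; ring. Qed.

Lemma csum_mulr n c f : csum n (fun k => Cmul (f k) c) = Cmul (csum n f) c.
Proof. induction n; simpl. apply Ceq; simpl; ring. rewrite IHn; ring. Qed.

Lemma csum_opp n f : csum n (fun k => Copp (f k)) = Copp (csum n f).
Proof. induction n; simpl. apply Ceq; simpl; ring. rewrite IHn; ring. Qed.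

Lemma csum_zero n f : (forall k, (k < n)%nat -> f k = C0) -> csum n f = C0.
Proof. induction n; simpl; intros; auto. rewrite IHn, H by (intros; try apply H; lia). ring. Qed.

Lemma csum_swap n m f :
  csum n (fun i => csum m (fun j => f i j)) = csum m (fun j => csum n (fun i => f i j)).
Proof.
  induction n; simpl.
  - symmetry; apply csum_zero; auto.
  - rewrite IHn. rewrite <- csum_add. reflexivity.
Qed.

Lemma csum_plus m n f : csum (m + n) f = Cadd (csum m f) (csum n (fun b => f (m + b)%nat)).
Proof.
  induction n; simpl.
  - rewrite Nat.add_0_r. ring.
  - rewrite Nat.add_succ_r. simpl. rewrite IHn. ring.
Qed.

Lemma csum_mul_split m n f :
  csum (m * n) f = csum m (fun a => csum n (fun b => f (a * n + b)%nat)).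
Proof.
  induction m; simpl; auto.
  rewrite Nat.add_comm, csum_plus, IHm. reflexivity.
Qed.

Lemma csum_first n f : csum (S n) f = Cadd (f O) (csum n (fun k => f (S k))).
Proof. induction n; simpl. ring. simpl in IHn. rewrite IHn. ring. Qed.

Lemma csum_delta n j f : (j < n)%nat ->
  csum n (fun k => if Nat.eqb k j then f k else C0) = f j.
Proof.
  induction n; intros; [lia|]. simpl.
  destruct (Nat.eq_dec j n).
  - subst. rewrite Nat.eqb_refl. rewrite csum_zero. ring.
    intros. destruct (Nat.eqb_spec k n); [lia|auto].
  - rewrite IHn by lia. destruct (Nat.eqb_spec n j); [lia|]. ring.
Qed.

Lemma re_csum n f : re (csum n f) = match n with O => 0 | S N => sum_f_R0 (fun k => re (f k)) N end.
Proof.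
  induction n; simpl; auto. destruct n; simpl in *. ring. rewrite IHn. reflexivity.
Qed.
Lemma im_csum n f : im (csum n f) = match n with O => 0 | S N => sum_f_R0 (fun k => im (f k)) N end.
Proof.
  induction n; simpl; auto. destruct n; simpl in *. ring. rewrite IHn. reflexivity.
Qed.

Lemma Cconj_csum n f : Cconj (csum n f) = csum n (fun k => Cconj (f k)).
Proof. induction n; simpl. apply Ceq; simpl; ring. rewrite Cconj_add, IHn; auto. Qed.

Lemma divmod_eq n a b : (b < n)%nat -> ((a * n + b) / n = a /\ (a * n + b) mod n = b)%nat.
Proof.
  intros. split.
  - symmetry; apply (Nat.div_unique _ _ _ b); lia.
  - symmetry; apply (Nat.mod_unique _ _ a); lia.
Qed.

Lemma div_lt m n i : (i < m * n)%nat -> (i / n < m)%nat.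
Proof. intros. apply Nat.Div0.div_lt_upper_bound. lia. Qed.
Lemma mod_lt m n i : (i < m * n)%nat -> (i mod n < n)%nat.
Proof. intros. apply Nat.mod_upper_bound. intro; subst; lia. Qed.
Lemma divmod_recomp n i : (n <> 0)%nat -> (i = (i / n) * n + i mod n)%nat.
Proof. intros. rewrite (Nat.div_mod i n) at 1 by auto. lia. Qed.

#[export] Instance meq_equiv d : Equivalence (meq d).
Proof.
  split; unfold meq; intros ? *; intros; [auto| symmetry; auto |].
  rewrite H by auto; auto.
Qed.

#[export] Instance mmul_proper d : Proper (meq d ==> meq d ==> meq d) (mmul d).
Proof.
  intros A A' HA B B' HB i j Hi Hj. unfold mmul. apply csum_ext; intros.
  rewrite HA, HB by auto; auto.
Qed.
#[export] Instance madd_proper d : Proper (meq d ==> meq d ==> meq d) madd.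
Proof. intros A A' HA B B' HB i j Hi Hj. unfold madd. rewrite HA, HB by auto; auto. Qed.
#[export] Instance mscale_proper d c : Proper (meq d ==> meq d) (mscale c).
Proof. intros A A' HA i j Hi Hj. unfold mscale. rewrite HA by auto; auto. Qed.
#[export] Instance madj_proper d : Proper (meq d ==> meq d) madj.
Proof. intros A A' HA i j Hi Hj. unfold madj. rewrite HA by auto; auto. Qed.

Lemma meq_refl_eq d A B : (forall i j, A i j = B i j) -> meq d A B.
Proof. intros H i j _ _; auto. Qed.

Lemma mmul_assoc d A B C : meq d (mmul d (mmul d A B) C) (mmul d A (mmul d B C)).
Proof.
  apply meq_refl_eq; intros. unfold mmul.
  rewrite <- (csum_ext _ (fun k => csum d (fun l => Cmul (A i l) (Cmul (B l k) (C k j))))).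
  2:{ intros. rewrite <- csum_mulr. apply csum_ext; intros; ring. }
  rewrite csum_swap. apply csum_ext; intros. rewrite <- csum_mull. auto.
Qed.

Lemma mmul_madd_l d A B C : meq d (mmul d (madd A B) C) (madd (mmul d A C) (mmul d B C)).
Proof. apply meq_refl_eq; intros. unfold mmul, madd. rewrite <- csum_add. apply csum_ext; intros; ring. Qed.
Lemma mmul_madd_r d A B C : meq d (mmul d C (madd A B)) (madd (mmul d C A) (mmul d C B)).
Proof. apply meq_refl_eq; intros. unfold mmul, madd. rewrite <- csum_add. apply csum_ext; intros; ring. Qed.
Lemma mmul_mscale_l d c A B : meq d (mmul d (mscale c A) B) (mscale c (mmul d A B)).
Proof. apply meq_refl_eq; intros. unfold mmul, mscale. rewrite <- csum_mull. apply csum_ext; intros; ring. Qed.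
Lemma mmul_mscale_r d c A B : meq d (mmul d A (mscale c B)) (mscale c (mmul d A B)).
Proof. apply meq_refl_eq; intros. unfold mmul, mscale. rewrite <- csum_mull. apply csum_ext; intros; ring. Qed.

Lemma mmul_mI_l d A : meq d (mmul d mI A) A.
Proof.
  intros i j Hi Hj. unfold mmul, mI.
  rewrite <- (csum_delta d i (fun k => A k j)) by auto. apply csum_ext; intros.
  destruct (Nat.eqb_spec i k), (Nat.eqb_spec k i); subst; try lia; ring.
Qed.
Lemma mmul_mI_r d A : meq d (mmul d A mI) A.
Proof.
  intros i j Hi Hj. unfold mmul, mI.
  rewrite <- (csum_delta d j (fun k => A i k)) by auto. apply csum_ext; intros.
  destruct (Nat.eqb_spec k j); subst; ring.
Qed.

Lemma madj_mmul d A B : meq d (madj (mmul d A B)) (mmul d (madj B) (madj A)).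
Proof. apply meq_refl_eq; intros. unfold madj, mmul. rewrite Cconj_csum. apply csum_ext; intros. rewrite Cconj_mul; ring. Qed.
Lemma madj_madj d A : meq d (madj (madj A)) A.
Proof. apply meq_refl_eq; intros. unfold madj. apply Cconj_conj. Qed.
Lemma madj_mI d : meq d (madj mI) mI.
Proof. apply meq_refl_eq; intros. unfold madj, mI. destruct (Nat.eqb_spec j i), (Nat.eqb_spec i j); subst; try lia; auto using Cconj_1, Cconj_0. Qed.
Lemma madj_madd d A B : meq d (madj (madd A B)) (madd (madj A) (madj B)).
Proof. apply meq_refl_eq; intros. unfold madj, madd. apply Cconj_add. Qed.
Lemma madj_mscale d c A : meq d (madj (mscale c A)) (mscale (Cconj c) (madj A)).
Proof. apply meq_refl_eq; intros. unfold madj, mscale. apply Cconj_mul. Qed.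

Lemma csum_prod m n f g :
  Cmul (csum m f) (csum n g) = csum m (fun a => csum n (fun b => Cmul (f a) (g b))).
Proof. rewrite <- csum_mulr. apply csum_ext; intros. rewrite <- csum_mull. auto. Qed.

Lemma kron_mixed m n A B C D :
  meq (m * n) (mmul (m * n) (kron n A B) (kron n C D)) (kron n (mmul m A C) (mmul n B D)).
Proof.
  intros i j Hi Hj. unfold mmul, kron. rewrite csum_prod, csum_mul_split.
  apply csum_ext; intros a Ha. apply csum_ext; intros b Hb.
  destruct (divmod_eq n a b Hb) as [E1 E2]. rewrite E1, E2. ring.
Qed.

Lemma kron_madj n A B : meq n (madj (kron n A B)) (kron n (madj A) (madj B)).
Proof. apply meq_refl_eq; intros. unfold madj, kron. apply Cconj_mul. Qed.
Lemma kron_madj' d n A B : meq d (madj (kron n A B)) (kron n (madj A) (madj B)).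
Proof. apply meq_refl_eq; intros. unfold madj, kron. apply Cconj_mul. Qed.

Lemma kron_proper m n A A' B B' : meq m A A' -> meq n B B' -> meq (m * n) (kron n A B) (kron n A' B').
Proof.
  intros HA HB i j Hi Hj. unfold kron.
  rewrite HA by (eapply div_lt; eauto). rewrite HB by (eapply mod_lt; eauto). auto.
Qed.

Lemma kron_madd_l d n A B C : meq d (kron n (madd A B) C) (madd (kron n A C) (kron n B C)).
Proof. apply meq_refl_eq; intros. unfold kron, madd. ring. Qed.
Lemma kron_madd_r d n A B C : meq d (kron n C (madd A B)) (madd (kron n C A) (kron n C B)).
Proof. apply meq_refl_eq; intros. unfold kron, madd. ring. Qed.
Lemma kron_mscale_l d n c A B : meq d (kron n (mscale c A) B) (mscale c (kron n A B)).
Proof. apply meq_refl_eq; intros. unfold kron, mscale. ring. Qed.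
Lemma kron_mscale_r d n c A B : meq d (kron n A (mscale c B)) (mscale c (kron n A B)).
Proof. apply meq_refl_eq; intros. unfold kron, mscale. ring. Qed.

Lemma kron_mI m n : meq (m * n) (kron n mI mI) mI.
Proof.
  intros i j Hi Hj. unfold kron, mI.
  assert (n <> 0)%nat by (intro; subst; lia).
  destruct (Nat.eqb_spec i j).
  - subst. rewrite !Nat.eqb_refl. ring.
  - destruct (Nat.eqb_spec (i/n) (j/n)), (Nat.eqb_spec (i mod n) (j mod n)); try ring.
    exfalso. match goal with H: i <> j |- _ => apply H end. rewrite (divmod_recomp n i), (divmod_recomp n j) by auto. lia.
Qed.

Lemma csum_mI_r n k g : (k < n)%nat -> csum n (fun e => Cmul (g e) (mI e k)) = g k.
Proof.
  intros. rewrite <- (csum_delta n k g) by auto. apply csum_ext; intros e He.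
  unfold mI. destruct (Nat.eqb_spec e k); ring.
Qed.
Lemma csum_mI_l n k g : (k < n)%nat -> csum n (fun e => Cmul (mI k e) (g e)) = g k.
Proof.
  intros. rewrite <- (csum_delta n k g) by auto. apply csum_ext; intros e He.
  unfold mI. destruct (Nat.eqb_spec k e), (Nat.eqb_spec e k); subst; try lia; ring.
Qed.

Lemma perm5 nk nc ne na nb (F : nat -> nat -> nat -> nat -> nat -> Cplx) :
  csum nk (fun k => csum nc (fun c => csum ne (fun e => csum na (fun a => csum nb (fun b => F k c e a b))))) =
  csum na (fun a => csum nc (fun c => csum nb (fun b => csum ne (fun e => csum nk (fun k => F k c e a b))))).
Proof.
  transitivity (csum nc (fun c => csum ne (fun e => csum na (fun a => csum nb (fun b => csum nk (fun k => F k c e a b)))))).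
  { rewrite csum_swap. apply csum_ext; intros. rewrite csum_swap. apply csum_ext; intros.
    rewrite csum_swap. apply csum_ext; intros. rewrite csum_swap. reflexivity. }
  transitivity (csum nc (fun c => csum na (fun a => csum nb (fun b => csum ne (fun e => csum nk (fun k => F k c e a b)))))).
  { apply csum_ext; intros. rewrite csum_swap. apply csum_ext; intros. rewrite csum_swap. reflexivity. }
  rewrite csum_swap. reflexivity.
Qed.

Lemma ptrace_conj m n V W M :
  meq n (mmul n (madj W) W) mI ->
  meq m (ptrace2 n (mmul (m*n) (mmul (m*n) (kron n V W) M) (madj (kron n V W))))
        (mmul m (mmul m V (ptrace2 n M)) (madj V)).
Proof.
  intros HW i j Hi Hj. unfold ptrace2.
  transitivity (csum m (fun a => csum m (fun c => csum n (fun b => csum n (fun e =>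
     Cmul (Cmul (Cmul (V i a) (M (a*n+b)%nat (c*n+e)%nat)) (Cconj (V j c)))
          (csum n (fun k => Cmul (Cconj (W k e)) (W k b)))))))).
  - transitivity (csum n (fun k => csum m (fun c => csum n (fun e => csum m (fun a => csum n (fun b =>
       Cmul (Cmul (Cmul (V i a) (M (a*n+b)%nat (c*n+e)%nat)) (Cconj (V j c)))
            (Cmul (Cconj (W k e)) (W k b)))))))).
    + unfold mmul, madj, kron.
      apply csum_ext; intros k Hk. rewrite csum_mul_split. apply csum_ext; intros c Hc.
      apply csum_ext; intros e He. rewrite <- csum_mulr, csum_mul_split.
      apply csum_ext; intros a Ha. apply csum_ext; intros b Hb.
      destruct (divmod_eq n i k Hk) as [E1 E2]. destruct (divmod_eq n j k Hk) as [E3 E4].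
      destruct (divmod_eq n a b Hb) as [E5 E6]. destruct (divmod_eq n c e He) as [E7 E8].
      rewrite E1, E2, E3, E4, E5, E6, E7, E8. rewrite Cconj_mul. ring.
    + rewrite perm5. apply csum_ext; intros a Ha. apply csum_ext; intros c Hc.
      apply csum_ext; intros b Hb. apply csum_ext; intros e He. apply csum_mull.
  - transitivity (csum m (fun a => csum m (fun c => csum n (fun b => csum n (fun e =>
     Cmul (Cmul (Cmul (V i a) (M (a*n+b)%nat (c*n+e)%nat)) (Cconj (V j c))) (mI e b)))))).
    + apply csum_ext; intros a Ha. apply csum_ext; intros c Hc.
      apply csum_ext; intros b Hb. apply csum_ext; intros e He.
      rewrite <- (HW e b He Hb). reflexivity.
    + unfold mmul, madj. rewrite csum_swap. apply csum_ext; intros c Hc.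
      rewrite <- csum_mulr. apply csum_ext; intros a Ha.
      rewrite <- csum_mull, <- csum_mulr. apply csum_ext; intros b Hb.
      rewrite csum_mI_r by auto. ring.
Qed.

Lemma ptrace_proper m n M M' : meq (m * n) M M' -> meq m (ptrace2 n M) (ptrace2 n M').
Proof.
  intros H i j Hi Hj. unfold ptrace2. apply csum_ext; intros. apply H; nia.
Qed.

Definition ccv (f : nat -> Cplx) (l : Cplx) : Prop :=
  Un_cv (fun N => re (f N)) (re l) /\ Un_cv (fun N => im (f N)) (im l).

Lemma Un_cv_ext (u v : nat -> R) l : (forall n, u n = v n) -> Un_cv u l -> Un_cv v l.
Proof. intros H Hu e He. destruct (Hu e He) as [N HN]. exists N; intros. rewrite <- H; auto. Qed.

Lemma Un_cv_const c : Un_cv (fun _ => c) c.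
Proof. intros e He. exists O. intros. unfold Rdist. rewrite Rminus_diag, Rabs_R0. lra. Qed.

Lemma ccv_const c : ccv (fun _ => c) c.
Proof. split; apply Un_cv_const. Qed.

Lemma ccv_ext f g l : (forall N, f N = g N) -> ccv f l -> ccv g l.
Proof. intros H [H1 H2]. split; eapply Un_cv_ext; eauto; intros; simpl; rewrite H; auto. Qed.

Lemma ccv_add f g a b : ccv f a -> ccv g b -> ccv (fun N => Cadd (f N) (g N)) (Cadd a b).
Proof. intros [H1 H2] [H3 H4]. split; simpl; apply CV_plus; auto. Qed.

Lemma ccv_mul f g a b : ccv f a -> ccv g b -> ccv (fun N => Cmul (f N) (g N)) (Cmul a b).
Proof.
  intros [H1 H2] [H3 H4]. split; simpl.
  - apply CV_minus; apply CV_mult; auto.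
  - apply CV_plus; apply CV_mult; auto.
Qed.

Lemma ccv_conj f a : ccv f a -> ccv (fun N => Cconj (f N)) (Cconj a).
Proof.
  intros [H1 H2]. split; simpl; auto.
  apply (Un_cv_ext (opp_seq (fun N => im (f N)))). intros; reflexivity. apply CV_opp; auto.
Qed.

Lemma ccv_csum n (f : nat -> nat -> Cplx) (l : nat -> Cplx) :
  (forall k, (k < n)%nat -> ccv (fun N => f N k) (l k)) ->
  ccv (fun N => csum n (f N)) (csum n l).
Proof.
  induction n; intros H; simpl. apply ccv_const.
  apply ccv_add; auto.
Qed.

Lemma ccv_unique f a b : ccv f a -> ccv f b -> a = b.
Proof.
  intros [H1 H2] [H3 H4]. apply Ceq; eapply UL_sequence; eauto.
Qed.

Definition Cnorm (z : Cplx) := Rabs (re z) + Rabs (im z).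

Lemma Cnorm_ge0 z : 0 <= Cnorm z.
Proof. unfold Cnorm. pose proof (Rabs_pos (re z)); pose proof (Rabs_pos (im z)); lra. Qed.

Lemma Cnorm_add a b : Cnorm (Cadd a b) <= Cnorm a + Cnorm b.
Proof.
  unfold Cnorm; simpl. pose proof (Rabs_triang (re a) (re b)); pose proof (Rabs_triang (im a) (im b)); lra.
Qed.

Lemma Cnorm_mul a b : Cnorm (Cmul a b) <= Cnorm a * Cnorm b.
Proof.
  unfold Cnorm; simpl.
  pose proof (Rabs_triang (re a * re b) (- (im a * im b))).
  pose proof (Rabs_triang (re a * im b) (im a * re b)).
  rewrite Rabs_Ropp in H. rewrite !Rabs_mult in H, H0.
  unfold Rminus. pose proof (Rabs_pos (re a)); pose proof (Rabs_pos (im a)).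
  pose proof (Rabs_pos (re b)); pose proof (Rabs_pos (im b)). nra.
Qed.

Lemma Cnorm_csum n f : Cnorm (csum n f) <= match n with O => 0 | S N => sum_f_R0 (fun k => Cnorm (f k)) N end.
Proof.
  induction n; simpl. unfold Cnorm; simpl; rewrite Rabs_R0; lra.
  eapply Rle_trans. apply Cnorm_add. destruct n; simpl in *.
  - unfold Cnorm at 1; simpl. rewrite Rabs_R0; lra.
  - lra.
Qed.

Lemma Cnorm_csum_le n f g : (forall k, (k < n)%nat -> Cnorm (f k) <= g k) ->
  Cnorm (csum n f) <= match n with O => 0 | S N => sum_f_R0 g N end.
Proof.
  induction n; intros H; simpl. unfold Cnorm; simpl; rewrite Rabs_R0; lra.
  eapply Rle_trans. apply Cnorm_add. destruct n; simpl in *.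
  - unfold Cnorm at 1; simpl. rewrite Rabs_R0. assert (Cnorm (f O) <= g O) by (apply H; lia). lra.
  - pose proof (H (S n)). assert (forall k, (k < S n)%nat -> Cnorm (f k) <= g k) by (intros; apply H; lia).
    specialize (IHn H1). assert (Cnorm (f (S n)) <= g (S n)) by (apply H; lia). lra.
Qed.

Lemma ccv_bound0 f g : (forall N, Cnorm (f N) <= g N) -> Un_cv g 0 -> ccv f C0.
Proof.
  intros H Hg. split; intros e He; destruct (Hg e He) as [N HN]; exists N; intros n Hn;
  specialize (HN n Hn); specialize (H n); unfold Rdist in *; simpl; rewrite Rminus_0_r in *;
  unfold Cnorm in H; pose proof (Rabs_pos (re (f n))); pose proof (Rabs_pos (im (f n)));
  pose proof (Rle_abs (g n)); lra.
Qed.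

Lemma ccv_sub0 f g l : ccv (fun N => Cadd (f N) (Copp (g N))) C0 -> ccv g l -> ccv f l.
Proof.
  intros H1 H2. assert (Cadd C0 l = l) by ring. rewrite <- H.
  eapply ccv_ext. 2:{ apply (ccv_add _ _ _ _ H1 H2). }
  intros; simpl. ring.
Qed.

Definition mcv d (F : nat -> Mat) (E : Mat) : Prop :=
  forall i j, (i < d)%nat -> (j < d)%nat -> ccv (fun N => F N i j) (E i j).

Lemma mcv_unique d F E E' : mcv d F E -> mcv d F E' -> meq d E E'.
Proof. intros H1 H2 i j Hi Hj. eapply ccv_unique; eauto. Qed.

Lemma mcv_ext d F G E : (forall N, meq d (F N) (G N)) -> mcv d F E -> mcv d G E.
Proof. intros H H1 i j Hi Hj. eapply ccv_ext. 2: apply H1; auto. intros; apply H; auto. Qed.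

Lemma mcv_proper d F E E' : meq d E E' -> mcv d F E -> mcv d F E'.
Proof. intros H H1 i j Hi Hj. rewrite <- H by auto. auto. Qed.

Lemma mcv_const d A : mcv d (fun _ => A) A.
Proof. intros i j _ _. apply ccv_const. Qed.

Lemma mcv_mmul d F G E E' : mcv d F E -> mcv d G E' -> mcv d (fun N => mmul d (F N) (G N)) (mmul d E E').
Proof.
  intros H1 H2 i j Hi Hj. unfold mmul. apply ccv_csum; intros. apply ccv_mul; auto.
Qed.

Lemma mcv_madd d F G E E' : mcv d F E -> mcv d G E' -> mcv d (fun N => madd (F N) (G N)) (madd E E').
Proof. intros H1 H2 i j Hi Hj. unfold madd. apply ccv_add; auto. Qed.

Lemma mcv_mscale d c F E : mcv d F E -> mcv d (fun N => mscale c (F N)) (mscale c E).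
Proof. intros H1 i j Hi Hj. unfold mscale. apply ccv_mul; auto. apply ccv_const. Qed.

Lemma mcv_madj d F E : mcv d F E -> mcv d (fun N => madj (F N)) (madj E).
Proof. intros H1 i j Hi Hj. unfold madj. apply ccv_conj; auto. Qed.

Lemma mcv_kron_l m n F E B : mcv m F E -> mcv (m * n) (fun N => kron n (F N) B) (kron n E B).
Proof.
  intros H i j Hi Hj. unfold kron. apply ccv_mul. apply H; eapply div_lt; eauto. apply ccv_const.
Qed.
Lemma mcv_kron_r m n F E A : mcv n F E -> mcv (m * n) (fun N => kron n A (F N)) (kron n A E).
Proof.
  intros H i j Hi Hj. unfold kron. apply ccv_mul. apply ccv_const. apply H; eapply mod_lt; eauto.
Qed.

Lemma mpow_proper d A A' k : meq d A A' -> meq d (mpow d A k) (mpow d A' k).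
Proof. intros H. induction k; simpl. reflexivity. rewrite IHk, H. reflexivity. Qed.

Lemma mpow_intertwine d A B C k :
  meq d (mmul d C A) (mmul d B C) -> meq d (mmul d C (mpow d A k)) (mmul d (mpow d B k) C).
Proof.
  intros H. induction k; simpl.
  - rewrite mmul_mI_l, mmul_mI_r. reflexivity.
  - rewrite <- mmul_assoc, IHk, mmul_assoc, H, <- mmul_assoc. reflexivity.
Qed.

Lemma mpow_comm d A k : meq d (mmul d A (mpow d A k)) (mmul d (mpow d A k) A).
Proof. apply mpow_intertwine. reflexivity. Qed.

Lemma mpow_madj d A k : meq d (mpow d (madj A) k) (madj (mpow d A k)).
Proof.
  induction k; simpl. symmetry; apply madj_mI.
  rewrite madj_mmul, IHk. rewrite <- madj_mmul, <- madj_mmul.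
  apply madj_proper. apply mpow_comm.
Qed.

Lemma mmul_csum_l d n (F : nat -> Mat) A i j :
  mmul d (fun i j => csum n (fun k => F k i j)) A i j = csum n (fun k => mmul d (F k) A i j).
Proof.
  unfold mmul. rewrite csum_swap. apply csum_ext; intros. rewrite csum_mulr. auto.
Qed.
Lemma mmul_csum_r d n (F : nat -> Mat) A i j :
  mmul d A (fun i j => csum n (fun k => F k i j)) i j = csum n (fun k => mmul d A (F k) i j).
Proof.
  unfold mmul. rewrite csum_swap. apply csum_ext; intros. rewrite csum_mull. auto.
Qed.

Definition aterm d A j : Mat := mscale (RtoC (/ INR (fact j))) (mpow d A j).

Lemma exp_partial_eq d A N : exp_partial d A N = fun i j => csum (S N) (fun k => aterm d A k i j).
Proof. reflexivity. Qed.

Lemma is_mexp_mcv d A E : is_mexp d A E <-> mcv d (exp_partial d A) E.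
Proof. unfold is_mexp, mcv, ccv. tauto. Qed.

Lemma exp_partial_proper d A A' N : meq d A A' -> meq d (exp_partial d A N) (exp_partial d A' N).
Proof.
  intros H i j Hi Hj. unfold exp_partial. apply csum_ext; intros.
  rewrite (mpow_proper d A A' k H i j Hi Hj). auto.
Qed.

Lemma is_mexp_proper d A A' E E' : meq d A A' -> meq d E E' -> is_mexp d A E -> is_mexp d A' E'.
Proof.
  intros HA HE H. apply is_mexp_mcv in H. apply is_mexp_mcv.
  eapply mcv_proper; eauto. eapply mcv_ext; eauto. intros; apply exp_partial_proper; auto.
Qed.

Lemma is_mexp_unique d A E E' : is_mexp d A E -> is_mexp d A E' -> meq d E E'.
Proof. rewrite !is_mexp_mcv. apply mcv_unique. Qed.

Lemma mmul_exp_partial_l d A C N :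
  meq d (mmul d C (exp_partial d A N)) (fun i j => csum (S N) (fun k => Cmul (RtoC (/ INR (fact k))) (mmul d C (mpow d A k) i j))).
Proof.
  intros i j Hi Hj. rewrite exp_partial_eq, mmul_csum_r. apply csum_ext; intros.
  unfold aterm. rewrite (mmul_mscale_r d _ _ _ i j); auto; lia.
Qed.
Lemma mmul_exp_partial_r d A C N :
  meq d (mmul d (exp_partial d A N) C) (fun i j => csum (S N) (fun k => Cmul (RtoC (/ INR (fact k))) (mmul d (mpow d A k) C i j))).
Proof.
  intros i j Hi Hj. rewrite exp_partial_eq, mmul_csum_l. apply csum_ext; intros.
  unfold aterm. rewrite (mmul_mscale_l d _ _ _ i j); auto; lia.
Qed.

Lemma exp_intertwine d A B C EA EB :
  meq d (mmul d C A) (mmul d B C) -> is_mexp d A EA -> is_mexp d B EB ->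
  meq d (mmul d C EA) (mmul d EB C).
Proof.
  intros H HA HB. rewrite is_mexp_mcv in HA, HB.
  apply (mcv_unique d (fun N => mmul d C (exp_partial d A N))).
  - apply mcv_mmul; auto. apply mcv_const.
  - eapply mcv_ext. 2:{ apply mcv_mmul. apply HB. apply mcv_const. }
    intros N. rewrite mmul_exp_partial_l, mmul_exp_partial_r. intros i j Hi Hj.
    apply csum_ext; intros. rewrite (mpow_intertwine d A B C k H i j Hi Hj). auto.
Qed.

Lemma exp_commute d A C E :
  commutes d C A -> is_mexp d A E -> commutes d C E.
Proof. intros H HE. unfold commutes in *. eapply exp_intertwine; eauto. Qed.

Lemma is_mexp_madj d A E : is_mexp d A E -> is_mexp d (madj A) (madj E).
Proof.
  rewrite !is_mexp_mcv. intros H. eapply mcv_ext. 2: apply mcv_madj; eauto.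
  intros N i j Hi Hj. unfold madj, exp_partial. rewrite Cconj_csum. apply csum_ext; intros.
  pose proof (mpow_madj d A k i j Hi Hj) as X. unfold madj in X. rewrite X, Cconj_mul, Cconj_RtoC. auto.
Qed.

Fixpoint rsum (n : nat) (f : nat -> R) : R :=
  match n with O => 0 | S m => rsum m f + f m end.

Lemma rsum_ge0 n f : (forall k, 0 <= f k) -> 0 <= rsum n f.
Proof. intros H; induction n; simpl. lra. specialize (H n). lra. Qed.

Lemma rsum_ge_term n f k : (forall k, 0 <= f k) -> (k < n)%nat -> f k <= rsum n f.
Proof.
  intros H; induction n; intros Hk; simpl. lia.
  destruct (Nat.eq_dec k n). subst. pose proof (rsum_ge0 n f H). lra.
  assert (f k <= rsum n f) by (apply IHn; lia). specialize (H n). lra.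
Qed.

Definition mbound d (A : Mat) : R := rsum d (fun i => rsum d (fun j => Cnorm (A i j))).

Lemma mbound_ge0 d A : 0 <= mbound d A.
Proof. unfold mbound. apply rsum_ge0. intros. apply rsum_ge0. intros. apply Cnorm_ge0. Qed.

Lemma mbound_entry d A i j : (i < d)%nat -> (j < d)%nat -> Cnorm (A i j) <= mbound d A.
Proof.
  intros. unfold mbound. eapply Rle_trans.
  2: apply (rsum_ge_term d (fun i => rsum d (fun j => Cnorm (A i j))) i); auto.
  apply (rsum_ge_term d (fun j => Cnorm (A i j))); auto. intros; apply Cnorm_ge0.
  intros; apply rsum_ge0; intros; apply Cnorm_ge0.
Qed.

Lemma Cnorm_csum_const n f c : (forall k, (k < n)%nat -> Cnorm (f k) <= c) -> Cnorm (csum n f) <= INR n * c.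
Proof.
  induction n; intros H. simpl. unfold Cnorm; simpl; rewrite Rabs_R0; lra.
  change (csum (S n) f) with (Cadd (csum n f) (f n)).
  eapply Rle_trans. apply Cnorm_add. rewrite S_INR.
  assert (Cnorm (csum n f) <= INR n * c) by (apply IHn; intros; apply H; lia).
  assert (Cnorm (f n) <= c) by (apply H; lia). lra.
Qed.

Lemma Cnorm_mI i j : Cnorm (mI i j) <= 1.
Proof. unfold mI. destruct (Nat.eqb i j); unfold Cnorm; simpl; rewrite ?Rabs_R0, ?Rabs_R1; lra. Qed.

Lemma mpow_bound d A k i j : (i < d)%nat -> (j < d)%nat ->
  Cnorm (mpow d A k i j) <= (INR d * mbound d A) ^ k.
Proof.
  revert i j; induction k; intros i j Hi Hj. simpl. apply Cnorm_mI. simpl mpow. rewrite <- tech_pow_Rmult.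
  unfold mmul. eapply Rle_trans. apply (Cnorm_csum_const _ _ ((INR d * mbound d A) ^ k * mbound d A)).
  - intros l Hl. eapply Rle_trans. apply Cnorm_mul. apply Rmult_le_compat.
    apply Cnorm_ge0. apply Cnorm_ge0. apply IHk; auto. apply mbound_entry; auto.
  - lra.
Qed.

Lemma Cnorm_scal r z : Cnorm (Cmul (RtoC r) z) = Rabs r * Cnorm z.
Proof. unfold Cnorm; simpl. replace (r * re z - 0 * im z) with (r * re z) by ring.
  replace (r * im z + 0 * re z) with (r * im z) by ring. rewrite !Rabs_mult. ring. Qed.

Lemma aterm_bound d A k i j : (i < d)%nat -> (j < d)%nat ->
  Cnorm (aterm d A k i j) <= / INR (fact k) * (INR d * mbound d A) ^ k.
Proof.
  intros. unfold aterm, mscale. rewrite Cnorm_scal.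
  rewrite Rabs_pos_eq. apply Rmult_le_compat_l. left; apply Rinv_0_lt_compat, INR_fact_lt_0.
  apply mpow_bound; auto. left; apply Rinv_0_lt_compat, INR_fact_lt_0.
Qed.

Lemma exp_in_exp x : Un_cv (fun N => sum_f_R0 (fun i => / INR (fact i) * x ^ i) N) (exp x).
Proof. unfold exp. destruct (exist_exp x) as [l Hl]. simpl. exact Hl. Qed.

Lemma series_conv (x : nat -> R) a :
  (forall k, Rabs (x k) <= / INR (fact k) * a ^ k) -> { l | Un_cv (fun N => sum_f_R0 x N) l }.
Proof.
  intros H. apply cv_cauchy_2. apply cauchy_abs. unfold Cauchy_crit_series.
  apply CV_Cauchy. apply (Rseries_CV_comp _ (fun i => / INR (fact i) * a ^ i)).
  - intros; split; auto. apply Rabs_pos.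
  - exists (exp a). apply exp_in_exp.
Qed.

Lemma re_le_Cnorm z : Rabs (re z) <= Cnorm z.
Proof. unfold Cnorm. pose proof (Rabs_pos (im z)). lra. Qed.
Lemma im_le_Cnorm z : Rabs (im z) <= Cnorm z.
Proof. unfold Cnorm. pose proof (Rabs_pos (re z)). lra. Qed.

Lemma re_csum_S N f : re (csum (S N) f) = sum_f_R0 (fun k => re (f k)) N.
Proof. apply re_csum. Qed.
Lemma im_csum_S N f : im (csum (S N) f) = sum_f_R0 (fun k => im (f k)) N.
Proof. apply im_csum. Qed.

Lemma entry_conv d A i j : (i < d)%nat -> (j < d)%nat ->
  { l | ccv (fun N => exp_partial d A N i j) l }.
Proof.
  intros Hi Hj.
  destruct (series_conv (fun k => re (aterm d A k i j)) (INR d * mbound d A)) as [lr Hr].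
  { intros. eapply Rle_trans. apply re_le_Cnorm. apply aterm_bound; auto. }
  destruct (series_conv (fun k => im (aterm d A k i j)) (INR d * mbound d A)) as [li Hli].
  { intros. eapply Rle_trans. apply im_le_Cnorm. apply aterm_bound; auto. }
  exists (mkC lr li). split; cbn [re im].
  - eapply Un_cv_ext. 2: apply Hr. intros. unfold exp_partial. rewrite re_csum_S. reflexivity.
  - eapply Un_cv_ext. 2: apply Hli. intros. unfold exp_partial. rewrite im_csum_S. reflexivity.
Qed.

Lemma mexp_exists d A : exists E, is_mexp d A E.
Proof.
  exists (fun i j => match lt_dec i d with
                  | left Hi => match lt_dec j d with
                               | left Hj => proj1_sig (entry_conv d A i j Hi Hj)
                               | right _ => C0 end
                  | right _ => C0 end).
  apply is_mexp_mcv. intros i j Hi Hj.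
  destruct (lt_dec i d); [|lia]. destruct (lt_dec j d); [|lia].
  destruct (entry_conv d A i j l l0). simpl. auto.
Qed.



Lemma fact_S_inv j : INR (S j) * / INR (fact (S j)) = / INR (fact j).
Proof.
  rewrite fact_simpl, mult_INR. pose proof (INR_fact_lt_0 j). pose proof (lt_0_INR (S j) ltac:(lia)).
  field. lra.
Qed.

Lemma aterm_succ d A j : meq d (mmul d (aterm d A j) A) (mscale (RtoC (INR (S j))) (aterm d A (S j))).
Proof.
  unfold aterm. rewrite mmul_mscale_l. intros i k Hi Hk. unfold mscale. simpl mpow.
  rewrite <- fact_S_inv, RtoC_mul. ring.
Qed.

Lemma aterm_comm d A B j : commutes d A B -> meq d (mmul d A (aterm d B j)) (mmul d (aterm d B j) A).
Proof.
  intros H. unfold aterm. rewrite mmul_mscale_l, mmul_mscale_r. apply mscale_proper.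
  apply mpow_intertwine. apply H.
Qed.

Definition cterm d A B n : Mat := fun i k => csum (S n) (fun j => mmul d (aterm d A j) (aterm d B (n - j)) i k).

Lemma comb_identity n (X : nat -> Cplx) :
  Cmul (RtoC (INR (S n))) (csum (S (S n)) X) =
  Cadd (csum (S n) (fun j => Cmul (RtoC (INR (S j))) (X (S j))))
       (csum (S n) (fun j => Cmul (RtoC (INR (S n - j))) (X j))).
Proof.
  transitivity (Cadd (csum (S (S n)) (fun j => Cmul (RtoC (INR j)) (X j)))
                     (csum (S (S n)) (fun j => Cmul (RtoC (INR (S n - j))) (X j)))).
  - rewrite <- csum_mull, <- csum_add. apply csum_ext; intros.
    assert (E : INR (S n) = INR k + INR (S n - k)) by (rewrite minus_INR by lia; ring).
    rewrite E, RtoC_add. ring.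
  - f_equal.
    + rewrite csum_first. simpl INR at 1. rewrite RtoC_0. ring_simplify. reflexivity.
    + change (csum (S (S n)) ?f) with (Cadd (csum (S n) f) (f (S n))).
      cbv beta. replace (S n - S n)%nat with O by lia. change (INR 0) with 0. rewrite RtoC_0. ring.
Qed.

Lemma aterm_0 d A : aterm d A 0 = mscale C1 mI.
Proof. unfold aterm. simpl. replace (/ 1) with 1 by (rewrite Rinv_1; auto). reflexivity. Qed.

Lemma cterm_eq d A B n : commutes d A B -> meq d (cterm d A B n) (aterm d (madd A B) n).
Proof.
  intros HAB. induction n.
  - intros i k Hi Hk. unfold cterm. simpl csum. rewrite !aterm_0.
    rewrite (mmul_mscale_l d _ _ _ i k Hi Hk). unfold mscale at 1.
    rewrite (mmul_mscale_r d _ _ _ i k Hi Hk). unfold mscale.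
    rewrite (mmul_mI_l d mI i k Hi Hk). ring.
  - intros i k Hi Hk.
    assert (HS : INR (S n) <> 0) by (apply not_0_INR; lia).
    transitivity (Cmul (RtoC (/ INR (S n))) (Cmul (RtoC (INR (S n))) (cterm d A B (S n) i k))).
    { assert (E : Cmul (RtoC (/ INR (S n))) (RtoC (INR (S n))) = C1).
      { rewrite <- RtoC_mul, Rinv_l; auto. }
      transitivity (Cmul (Cmul (RtoC (/ INR (S n))) (RtoC (INR (S n)))) (cterm d A B (S n) i k)).
      rewrite E; ring. ring. }
    assert (M1 : forall j, meq d (mmul d (mmul d (aterm d A j) (aterm d B (n-j))) A)
        (mscale (RtoC (INR (S j))) (mmul d (aterm d A (S j)) (aterm d B (n - j))))).
    { intros. rewrite mmul_assoc, <- (aterm_comm d A B (n-j) HAB). rewrite <- mmul_assoc, aterm_succ, mmul_mscale_l. reflexivity. }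
    assert (M2 : forall j, meq d (mmul d (mmul d (aterm d A j) (aterm d B (n-j))) B)
        (mscale (RtoC (INR (S (n - j)))) (mmul d (aterm d A j) (aterm d B (S (n - j)))))).
    { intros. rewrite mmul_assoc, aterm_succ, mmul_mscale_r. reflexivity. }
    unfold cterm at 1. rewrite comb_identity.
    transitivity (Cmul (RtoC (/ INR (S n))) (mmul d (cterm d A B n) (madd A B) i k)).
    { f_equal. rewrite (mmul_madd_r d _ _ _ i k Hi Hk). unfold madd. f_equal.
      - unfold cterm. rewrite mmul_csum_l. apply csum_ext; intros j Hj.
        symmetry. etransitivity. apply (M1 j i k Hi Hk). unfold mscale. reflexivity.
      - unfold cterm. rewrite mmul_csum_l. apply csum_ext; intros j Hj.
        symmetry. etransitivity. apply (M2 j i k Hi Hk). unfold mscale.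
        replace (S n - j)%nat with (S (n - j)) by lia. reflexivity. }
    rewrite (mmul_proper d _ _ IHn (madd A B) (madd A B) ltac:(reflexivity) i k Hi Hk).
    rewrite (aterm_succ d (madd A B) n i k Hi Hk). unfold mscale at 1.
    transitivity (Cmul (Cmul (RtoC (/ INR (S n))) (RtoC (INR (S n)))) (aterm d (madd A B) (S n) i k)).
    ring. rewrite <- RtoC_mul, Rinv_l by auto. rewrite RtoC_1. ring.
Qed.

Lemma csum_trunc N M f : (N <= M)%nat ->
  csum M (fun j => if (j <? N)%nat then f j else C0) = csum N f.
Proof.
  intros H. replace M with (N + (M - N))%nat by lia. rewrite csum_plus.
  rewrite (csum_zero (M - N)). rewrite (csum_ext N _ f). ring.
  - intros. destruct (Nat.ltb_spec k N); auto; lia.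
  - intros. destruct (Nat.ltb_spec (N + k) N); auto; lia.
Qed.

Lemma reidx (g : nat -> nat -> Cplx) N M : (N <= S M)%nat ->
  csum N (fun n => csum (S n) (fun j => g j (n - j)%nat)) =
  csum (S M) (fun j => csum (S M) (fun l => if (j + l <? N)%nat then g j l else C0)).
Proof.
  induction N; intros HN.
  - symmetry. apply csum_zero; intros. apply csum_zero; intros. auto.
  - change (csum (S N) ?f) with (Cadd (csum N f) (f N)). rewrite IHN by lia.
    transitivity (Cadd (csum (S M) (fun j => csum (S M) (fun l => if (j + l <? N)%nat then g j l else C0)))
        (csum (S M) (fun j => csum (S M) (fun l => if (j + l =? N)%nat then g j l else C0)))).
    + f_equal. rewrite <- (csum_trunc (S N) (S M) (fun j => g j (N - j)%nat)) by lia.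
      apply csum_ext; intros j Hj. destruct (Nat.ltb_spec j (S N)).
      * rewrite <- (csum_delta (S M) (N - j) (fun l => g j l)) by lia.
        apply csum_ext; intros l Hl. destruct (Nat.eqb_spec (j + l) N), (Nat.eqb_spec l (N - j)); auto; lia.
      * symmetry; apply csum_zero; intros l Hl. destruct (Nat.eqb_spec (j + l) N); auto; lia.
    + rewrite <- csum_add. apply csum_ext; intros j Hj. rewrite <- csum_add. apply csum_ext; intros l Hl.
      destruct (Nat.ltb_spec (j + l) N), (Nat.eqb_spec (j + l) N), (Nat.ltb_spec (j + l) (S N)); try lia; ring.
Qed.

Lemma prod_diff d A B N i k : commutes d A B -> (i < d)%nat -> (k < d)%nat ->
  Cadd (mmul d (exp_partial d A N) (exp_partial d B N) i k) (Copp (exp_partial d (madd A B) N i k))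
  = csum (S N) (fun j => csum (S N) (fun l => if (j + l <? S N)%nat then C0 else mmul d (aterm d A j) (aterm d B l) i k)).
Proof.
  intros HAB Hi Hk.
  assert (E1 : mmul d (exp_partial d A N) (exp_partial d B N) i k =
      csum (S N) (fun j => csum (S N) (fun l => mmul d (aterm d A j) (aterm d B l) i k))).
  { rewrite !exp_partial_eq. rewrite mmul_csum_l. apply csum_ext; intros.
    rewrite mmul_csum_r. reflexivity. }
  assert (E2 : exp_partial d (madd A B) N i k =
      csum (S N) (fun j => csum (S N) (fun l => if (j + l <? S N)%nat then mmul d (aterm d A j) (aterm d B l) i k else C0))).
  { rewrite <- reidx by lia. rewrite exp_partial_eq. apply csum_ext; intros n Hn.
    rewrite <- (cterm_eq d A B n HAB i k Hi Hk). reflexivity. }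
  rewrite E1, E2. rewrite <- csum_opp, <- csum_add. apply csum_ext; intros j Hj.
  rewrite <- csum_opp, <- csum_add. apply csum_ext; intros l Hl.
  destruct (j + l <? S N)%nat; ring.
Qed.

Lemma Cnorm_csum_re n f g : (forall k, (k < n)%nat -> Cnorm (f k) <= re (g k)) ->
  Cnorm (csum n f) <= re (csum n g).
Proof.
  induction n; intros H; simpl. unfold Cnorm; simpl; rewrite Rabs_R0; lra.
  eapply Rle_trans. apply Cnorm_add.
  assert (Cnorm (csum n f) <= re (csum n g)) by (apply IHn; intros; apply H; lia).
  assert (Cnorm (f n) <= re (g n)) by (apply H; lia). lra.
Qed.

Definition sc (x : R) : Mat := fun _ _ => RtoC x.

Lemma mpow_sc x k : mpow 1 (sc x) k O O = RtoC (x ^ k).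
Proof.
  induction k. reflexivity. simpl mpow. unfold mmul. simpl csum. rewrite IHk.
  apply Ceq; unfold sc; simpl; ring.
Qed.

Lemma aterm_sc x j : aterm 1 (sc x) j O O = RtoC (/ INR (fact j) * x ^ j).
Proof. unfold aterm, mscale. rewrite mpow_sc, RtoC_mul. reflexivity. Qed.

Lemma exp_partial_sc x N : exp_partial 1 (sc x) N O O = RtoC (sum_f_R0 (fun i => / INR (fact i) * x ^ i) N).
Proof.
  rewrite exp_partial_eq. apply Ceq.
  - rewrite re_csum_S. change (re (RtoC ?s)) with s. apply sum_eq; intros. rewrite aterm_sc. reflexivity.
  - rewrite im_csum_S. change (im (RtoC ?s)) with 0. rewrite (sum_eq _ (fun _ => 0)).
    2:{ intros. rewrite aterm_sc. reflexivity. }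
    clear; induction N; simpl; auto. rewrite IHN; ring.
Qed.

Definition ecoef x j := / INR (fact j) * x ^ j.

Lemma ecoef_ge0 x j : 0 <= x -> 0 <= ecoef x j.
Proof. intros. unfold ecoef. apply Rmult_le_pos. left; apply Rinv_0_lt_compat, INR_fact_lt_0. apply pow_le; auto. Qed.

Lemma diff_bound d A B N i k : commutes d A B -> (i < d)%nat -> (k < d)%nat ->
  Cnorm (Cadd (mmul d (exp_partial d A N) (exp_partial d B N) i k) (Copp (exp_partial d (madd A B) N i k)))
  <= INR d * (sum_f_R0 (ecoef (INR d * mbound d A)) N * sum_f_R0 (ecoef (INR d * mbound d B)) N
              - sum_f_R0 (ecoef (INR d * mbound d A + INR d * mbound d B)) N).
Proof.
  intros HAB Hi Hk. set (x := INR d * mbound d A). set (y := INR d * mbound d B).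
  assert (Hx : 0 <= x) by (apply Rmult_le_pos; [apply pos_INR| apply mbound_ge0]).
  assert (Hy : 0 <= y) by (apply Rmult_le_pos; [apply pos_INR| apply mbound_ge0]).
  assert (H1 : commutes 1 (sc x) (sc y)).
  { intros a b Ha Hb. unfold mmul, sc. simpl. apply Ceq; simpl; ring. }
  pose proof (prod_diff 1 (sc x) (sc y) N O O H1 ltac:(lia) ltac:(lia)) as D1.
  assert (Hsum : exp_partial 1 (madd (sc x) (sc y)) N O O = exp_partial 1 (sc (x + y)) N O O).
  { apply exp_partial_proper; try lia. intros a b _ _. unfold madd, sc. rewrite RtoC_add. auto. }
  rewrite Hsum, !exp_partial_sc in D1.
  eapply Rle_trans. rewrite (prod_diff d A B N i k HAB Hi Hk).
  apply (Cnorm_csum_re _ _ (fun j => Cmul (RtoC (INR d)) (csum (S N) (fun l => if (j + l <? S N)%nat then C0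
      else mmul 1 (aterm 1 (sc x) j) (aterm 1 (sc y) l) O O)))).
  - intros j Hj. rewrite <- csum_mull. apply Cnorm_csum_re. intros l Hl.
    destruct (j + l <? S N)%nat.
    + unfold Cnorm; simpl; rewrite Rabs_R0; lra.
    + unfold mmul at 2. simpl csum. rewrite !aterm_sc. simpl re.
      unfold mmul. eapply Rle_trans. apply (Cnorm_csum_const _ _ (ecoef x j * ecoef y l)).
      * intros m Hm. eapply Rle_trans. apply Cnorm_mul. apply Rmult_le_compat; try apply Cnorm_ge0.
        apply aterm_bound; auto. apply aterm_bound; auto.
      * unfold ecoef. right. ring.
  - rewrite csum_mull. rewrite <- D1. unfold mmul at 1. simpl csum. rewrite !exp_partial_sc. unfold ecoef. simpl. right. ring.
Qed.

Lemma Cnorm_opp z : Cnorm (Copp z) = Cnorm z.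
Proof. unfold Cnorm; simpl. rewrite !Rabs_Ropp. auto. Qed.

Lemma mexp_mul d A B EA EB : commutes d A B -> is_mexp d A EA -> is_mexp d B EB ->
  is_mexp d (madd A B) (mmul d EA EB).
Proof.
  intros HAB HA HB. rewrite is_mexp_mcv in *. intros i k Hi Hk.
  apply (ccv_sub0 _ (fun N => mmul d (exp_partial d A N) (exp_partial d B N) i k)).
  2:{ apply mcv_mmul; auto. }
  set (x := INR d * mbound d A). set (y := INR d * mbound d B).
  apply (ccv_bound0 _ (fun N => INR d * (sum_f_R0 (ecoef x) N * sum_f_R0 (ecoef y) N - sum_f_R0 (ecoef (x + y)) N))).
  - intros N. eapply Rle_trans. 2: apply (diff_bound d A B N i k HAB Hi Hk).
    right. rewrite <- Cnorm_opp. f_equal. ring.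
  - replace 0 with (INR d * (exp x * exp y - exp (x + y))).
    2:{ rewrite exp_plus. ring. }
    apply CV_mult. apply Un_cv_const. apply CV_minus. apply CV_mult; apply exp_in_exp. apply exp_in_exp.
Qed.

Lemma mexp_zero d Z : meq d Z (fun _ _ => C0) -> is_mexp d Z mI.
Proof.
  intros HZ. rewrite is_mexp_mcv. apply (mcv_ext d (fun _ => mI)). 2: apply mcv_const.
  intros N i j Hi Hj. rewrite exp_partial_eq. rewrite csum_first. rewrite csum_zero.
  - rewrite aterm_0. unfold mscale. ring.
  - intros k Hk. unfold aterm. simpl mpow. unfold mscale.
    rewrite (mmul_proper d _ _ (reflexivity _) _ _ HZ i j Hi Hj). unfold mmul.
    rewrite csum_zero. ring. intros; ring.
Qed.

Lemma mpow_kron_l m n A k : meq (m * n) (mpow (m * n) (kron n A mI) k) (kron n (mpow m A k) mI).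
Proof.
  induction k; simpl. symmetry; apply kron_mI.
  rewrite IHk, kron_mixed. apply kron_proper. reflexivity. apply mmul_mI_l.
Qed.
Lemma mpow_kron_r m n B k : meq (m * n) (mpow (m * n) (kron n mI B) k) (kron n mI (mpow n B k)).
Proof.
  induction k; simpl. symmetry; apply kron_mI.
  rewrite IHk, kron_mixed. apply kron_proper. apply mmul_mI_l. reflexivity.
Qed.

Lemma mexp_kron_l m n A E : is_mexp m A E -> is_mexp (m * n) (kron n A mI) (kron n E mI).
Proof.
  rewrite !is_mexp_mcv. intros H. eapply mcv_ext. 2: apply mcv_kron_l; eauto.
  intros N i j Hi Hj. unfold kron at 1. unfold exp_partial. rewrite <- csum_mulr.
  apply csum_ext; intros k Hk. rewrite (mpow_kron_l m n A k i j Hi Hj). unfold kron. ring.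
Qed.
Lemma mexp_kron_r m n B E : is_mexp n B E -> is_mexp (m * n) (kron n mI B) (kron n mI E).
Proof.
  rewrite !is_mexp_mcv. intros H. eapply mcv_ext. 2: apply mcv_kron_r; eauto.
  intros N i j Hi Hj. unfold kron at 1. unfold exp_partial. rewrite <- csum_mull.
  apply csum_ext; intros k Hk. rewrite (mpow_kron_r m n B k i j Hi Hj). unfold kron. ring.
Qed.

Lemma kron_commute_IA m n A B : commutes (m * n) (kron n A mI) (kron n mI B).
Proof.
  unfold commutes. rewrite !kron_mixed. apply kron_proper.
  rewrite mmul_mI_l, mmul_mI_r. reflexivity. rewrite mmul_mI_l, mmul_mI_r. reflexivity.
Qed.

Lemma kron_split m n A B : meq (m * n) (mmul (m * n) (kron n A mI) (kron n mI B)) (kron n A B).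
Proof. rewrite kron_mixed. apply kron_proper. apply mmul_mI_r. apply mmul_mI_l. Qed.

Lemma mexp_kron_sum m n A B EA EB : is_mexp m A EA -> is_mexp n B EB ->
  is_mexp (m * n) (madd (kron n A mI) (kron n mI B)) (kron n EA EB).
Proof.
  intros HA HB. eapply is_mexp_proper. reflexivity. apply kron_split.
  apply mexp_mul. apply kron_commute_IA. apply mexp_kron_l; auto. apply mexp_kron_r; auto.
Qed.

Lemma mscale_madd d c A B : meq d (mscale c (madd A B)) (madd (mscale c A) (mscale c B)).
Proof. apply meq_refl_eq; intros. unfold mscale, madd. ring. Qed.

Lemma mexp_unitary_gen d A E : meq d (madj A) (mscale (RtoC (-1)) A) -> is_mexp d A E -> unitary d E.
Proof.
  intros HA HE. pose proof (is_mexp_madj d A E HE) as HE'.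
  eapply is_mexp_proper in HE'. 2: apply HA. 2: reflexivity.
  assert (Hc1 : commutes d A (mscale (RtoC (-1)) A)).
  { unfold commutes. rewrite mmul_mscale_r, mmul_mscale_l. reflexivity. }
  assert (Hc2 : commutes d (mscale (RtoC (-1)) A) A).
  { unfold commutes. rewrite mmul_mscale_r, mmul_mscale_l. reflexivity. }
  assert (Z1 : meq d (madd A (mscale (RtoC (-1)) A)) (fun _ _ => C0)).
  { apply meq_refl_eq; intros. unfold madd, mscale. apply Ceq; simpl; ring. }
  assert (Z2 : meq d (madd (mscale (RtoC (-1)) A) A) (fun _ _ => C0)).
  { apply meq_refl_eq; intros. unfold madd, mscale. apply Ceq; simpl; ring. }
  split.
  - apply (is_mexp_unique d (madd A (mscale (RtoC (-1)) A))).
    apply mexp_mul; auto. eapply is_mexp_proper. symmetry; apply Z1. reflexivity. apply mexp_zero. reflexivity.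
  - apply (is_mexp_unique d (madd (mscale (RtoC (-1)) A) A)).
    apply mexp_mul; auto. eapply is_mexp_proper. symmetry; apply Z2. reflexivity. apply mexp_zero. reflexivity.
Qed.

Lemma herm_scale_adj d H t : hermitian d H ->
  meq d (madj (mscale (mkC 0 (- t)) H)) (mscale (RtoC (-1)) (mscale (mkC 0 (- t)) H)).
Proof.
  intros HH. unfold hermitian in HH. rewrite madj_mscale. rewrite HH. intros i j Hi Hj. unfold mscale.
  apply Ceq; simpl; ring.
Qed.

Lemma mexp_unitary d H t E : hermitian d H -> is_mexp d (mscale (mkC 0 (- t)) H) E -> unitary d E.
Proof. intros. eapply mexp_unitary_gen; eauto. apply herm_scale_adj; auto. Qed.

Lemma hermitian_kron_sum m n A B : hermitian m A -> hermitian n B ->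
  hermitian (m * n) (madd (kron n A mI) (kron n mI B)).
Proof.
  unfold hermitian. intros HA HB. rewrite madj_madd, !kron_madj'.
  apply madd_proper; apply kron_proper; auto using madj_mI.
Qed.

Lemma tacv_ext f g l : (forall x, f x = g x) -> time_avg_cv f l -> time_avg_cv g l.
Proof. intros H. replace g with f; auto. apply functional_extensionality; auto. Qed.

Lemma tacv_const c : time_avg_cv (fun _ => c) c.
Proof.
  intros eps He. exists 1. split. lra. intros s Hs.
  exists (RiemannInt_P14 0 s c). pose proof (RiemannInt_P15 (RiemannInt_P14 0 s c)) as E. unfold fct_cte in E |- *. rewrite E.
  replace (c * (s - 0) / s - c) with 0 by (field; lra). rewrite Rabs_R0. lra.
Qed.

Lemma tacv_plus_scal f g a b l : time_avg_cv f a -> time_avg_cv g b ->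
  time_avg_cv (fun x => f x + l * g x) (a + l * b).
Proof.
  intros Hf Hg eps He.
  set (e' := eps / (2 * (1 + Rabs l))).
  assert (He' : 0 < e') by (unfold e'; apply Rdiv_lt_0_compat; auto; pose proof (Rabs_pos l); lra).
  destruct (Hf e' He') as [S1 [HS1 H1]]. destruct (Hg e' He') as [S2 [HS2 H2]].
  exists (Rmax S1 S2). split. eapply Rlt_le_trans; [apply HS1 | apply Rmax_l].
  intros s Hs.
  assert (Hs1 : S1 <= s) by (eapply Rle_trans; [apply Rmax_l | apply Hs]).
  assert (Hs2 : S2 <= s) by (eapply Rle_trans; [apply Rmax_r | apply Hs]).
  destruct (H1 s Hs1) as [pr1 Hp1]. destruct (H2 s Hs2) as [pr2 Hp2].
  exists (RiemannInt_P10 l pr1 pr2).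
  rewrite (RiemannInt_P13 pr1 pr2).
  assert (Hs0 : 0 < s) by (eapply Rlt_le_trans; [apply HS1|]; eapply Rle_trans; [apply Rmax_l|apply Hs]).
  replace ((RiemannInt pr1 + l * RiemannInt pr2) / s - (a + l * b)) with
      ((RiemannInt pr1 / s - a) + l * (RiemannInt pr2 / s - b)) by (field; lra).
  eapply Rle_lt_trans. apply Rabs_triang. rewrite Rabs_mult.
  assert (Rabs l * Rabs (RiemannInt pr2 / s - b) <= Rabs l * e').
  { apply Rmult_le_compat_l. apply Rabs_pos. lra. }
  assert (e' * (2 * (1 + Rabs l)) = eps) by (unfold e'; field; pose proof (Rabs_pos l); lra).
  pose proof (Rabs_pos l). nra.
Qed.

Lemma tacv_unique f a b : time_avg_cv f a -> time_avg_cv f b -> a = b.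
Proof.
  intros Ha Hb. destruct (Req_dec a b) as [|Hne]; auto. exfalso.
  set (eps := Rabs (a - b) / 3).
  assert (He : 0 < eps) by (unfold eps; apply Rdiv_lt_0_compat; [apply Rabs_pos_lt; lra | lra]).
  destruct (Ha eps He) as [S1 [HS1 H1]]. destruct (Hb eps He) as [S2 [HS2 H2]].
  destruct (H1 (Rmax S1 S2) (Rmax_l _ _)) as [pr1 Hp1].
  destruct (H2 (Rmax S1 S2) (Rmax_r _ _)) as [pr2 Hp2].
  rewrite (RiemannInt_P5 pr2 pr1) in Hp2.
  pose proof (Rabs_triang (RiemannInt pr1 / Rmax S1 S2 - b) (- (RiemannInt pr1 / Rmax S1 S2 - a))).
  rewrite Rabs_Ropp in H.
  replace (RiemannInt pr1 / Rmax S1 S2 - b + - (RiemannInt pr1 / Rmax S1 S2 - a)) with (a - b) in H by ring.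
  unfold eps in *. lra.
Qed.

Definition ctacv (F : R -> Cplx) (L : Cplx) : Prop :=
  time_avg_cv (fun t => re (F t)) (re L) /\ time_avg_cv (fun t => im (F t)) (im L).

Lemma ctacv_const c : ctacv (fun _ => c) c.
Proof. split; apply tacv_const. Qed.

Lemma ctacv_ext F G L : (forall t, F t = G t) -> ctacv F L -> ctacv G L.
Proof. intros H [H1 H2]. split; eapply tacv_ext; eauto; intros; simpl; rewrite H; auto. Qed.

Lemma ctacv_unique F a b : ctacv F a -> ctacv F b -> a = b.
Proof. intros [H1 H2] [H3 H4]. apply Ceq; eapply tacv_unique; eauto. Qed.

Lemma ctacv_add F G a b : ctacv F a -> ctacv G b -> ctacv (fun t => Cadd (F t) (G t)) (Cadd a b).
Proof.
  intros [H1 H2] [H3 H4]. split; simpl.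
  - pose proof (tacv_plus_scal _ _ _ _ 1 H1 H3). rewrite Rmult_1_l in H. eapply tacv_ext; eauto. intros; simpl; ring.
  - pose proof (tacv_plus_scal _ _ _ _ 1 H2 H4). rewrite Rmult_1_l in H. eapply tacv_ext; eauto. intros; simpl; ring.
Qed.

Lemma tacv_lin f g a b p q : time_avg_cv f a -> time_avg_cv g b ->
  time_avg_cv (fun x => p * f x + q * g x) (p * a + q * b).
Proof.
  intros Hf Hg. pose proof (tacv_plus_scal _ _ _ _ p (tacv_const 0) Hf) as H1.
  pose proof (tacv_plus_scal _ _ _ _ q H1 Hg) as H2.
  replace (p * a + q * b) with (0 + p * a + q * b) by ring.
  eapply tacv_ext; eauto. intros; simpl; ring.
Qed.

Lemma ctacv_mull c F a : ctacv F a -> ctacv (fun t => Cmul c (F t)) (Cmul c a).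
Proof.
  intros [H1 H2]. split; simpl.
  - pose proof (tacv_lin _ _ _ _ (re c) (- im c) H1 H2). eapply tacv_ext. 2: { replace (re c * re a - im c * im a) with (re c * re a + - im c * im a) by ring. apply H. } intros; simpl; ring.
  - pose proof (tacv_lin _ _ _ _ (re c) (im c) H2 H1). eapply tacv_ext. 2: { replace (re c * im a + im c * re a) with (re c * im a + im c * re a) by ring. apply H. } intros; simpl; ring.
Qed.

Lemma ctacv_mulr c F a : ctacv F a -> ctacv (fun t => Cmul (F t) c) (Cmul a c).
Proof.
  intros H. pose proof (ctacv_mull c F a H). replace (Cmul a c) with (Cmul c a) by ring.
  eapply ctacv_ext; eauto. intros; simpl; ring.
Qed.

Lemma ctacv_csum n (F : R -> nat -> Cplx) (L : nat -> Cplx) :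
  (forall k, (k < n)%nat -> ctacv (fun t => F t k) (L k)) ->
  ctacv (fun t => csum n (F t)) (csum n L).
Proof.
  induction n; intros H; simpl. apply ctacv_const.
  apply ctacv_add; auto.
Qed.

Lemma commutes_scale d C A c : commutes d C A -> commutes d C (mscale c A).
Proof. unfold commutes. intros H. rewrite mmul_mscale_r, mmul_mscale_l, H. reflexivity. Qed.

Lemma commutes_sym d A B : commutes d A B -> commutes d B A.
Proof. unfold commutes. intros H. symmetry. auto. Qed.

Lemma commutes_scale_l d C A c : commutes d C A -> commutes d (mscale c C) A.
Proof. intros. apply commutes_sym, commutes_scale, commutes_sym; auto. Qed.

Lemma gibbs_commute d beta H gam z Ut :
  is_gibbs d beta H gam -> is_mexp d (mscale z H) Ut -> commutes d gam Ut.
Proof.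
  intros [E [HE Hg]] HU.
  assert (C1' : commutes d H E).
  { eapply exp_commute; eauto. apply commutes_scale. unfold commutes; reflexivity. }
  assert (C2 : commutes d E Ut).
  { eapply exp_commute; eauto. apply commutes_scale. apply commutes_sym. auto. }
  unfold commutes in *. rewrite Hg. rewrite mmul_mscale_l, mmul_mscale_r, C2. reflexivity.
Qed.

Lemma unitary_conj_inv d C Ut : commutes d C Ut -> unitary d Ut ->
  meq d (mmul d (mmul d Ut C) (madj Ut)) C.
Proof.
  intros HC [U1 U2]. unfold commutes in HC. rewrite <- HC, mmul_assoc, U1. apply mmul_mI_r.
Qed.

Lemma proj_commute d H v lam : hermitian d H ->
  re (csum d (fun i => Cmul (Cconj (v i)) (v i))) = 1 ->
  (forall i, (i < d)%nat -> mapply d H v i = Cmul lam (v i)) ->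
  commutes d (proj v) H.
Proof.
  intros HH Hn Hev.
  set (s := csum d (fun i => Cmul (Cconj (v i)) (v i))).
  assert (Hs : s = C1).
  { assert (Him : im s = 0).
    { unfold s. clear. induction d. reflexivity.
      change (csum (S d) ?f) with (Cadd (csum d f) (f d)). unfold Cadd at 1. simpl im at 1. rewrite IHd. simpl. ring. }
    apply Ceq. apply Hn. rewrite Him. reflexivity. }
  set (q := csum d (fun i => Cmul (Cconj (v i)) (mapply d H v i))).
  assert (Hq : q = lam).
  { unfold q. rewrite (csum_ext _ _ (fun i => Cmul lam (Cmul (Cconj (v i)) (v i)))).
    rewrite csum_mull. fold s. rewrite Hs. ring. intros. rewrite Hev by auto. ring. }
  assert (Hqc : Cconj q = q).
  { unfold q, mapply. rewrite Cconj_csum.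
    transitivity (csum d (fun i => csum d (fun k => Cmul (v i) (Cmul (Cconj (H i k)) (Cconj (v k)))))).
    { apply csum_ext; intros. rewrite Cconj_mul, Cconj_conj, Cconj_csum, <- csum_mull.
      apply csum_ext; intros. rewrite Cconj_mul. auto. }
    rewrite csum_swap. apply csum_ext; intros k Hk. rewrite <- csum_mull. apply csum_ext; intros i Hi.
    pose proof (HH k i Hk Hi) as E. unfold madj in E. rewrite E. ring. }
  assert (Hl : Cconj lam = lam) by (rewrite <- Hq; auto).
  intros i j Hi Hj. unfold mmul, proj.
  transitivity (Cmul (v i) (Cconj (csum d (fun k => Cmul (H j k) (v k))))).
  { rewrite Cconj_csum, <- csum_mull. apply csum_ext; intros k Hk.
    pose proof (HH k j Hk Hj) as E. unfold madj in E. rewrite Cconj_mul, E. ring. }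
  fold (mapply d H v j). rewrite Hev by auto. rewrite Cconj_mul, Hl.
  transitivity (Cmul (csum d (fun k => Cmul (H i k) (v k))) (Cconj (v j))).
  2:{ rewrite <- csum_mulr. apply csum_ext; intros; ring. }
  fold (mapply d H v i). rewrite Hev by auto. ring.
Qed.

Lemma conj_swap d U G M : commutes d U G ->
  meq d (mmul d (mmul d U (mmul d (mmul d G M) (madj G))) (madj U))
        (mmul d (mmul d G (mmul d (mmul d U M) (madj U))) (madj G)).
Proof.
  intros HUG. unfold commutes in HUG.
  assert (AdjUG : meq d (mmul d (madj G) (madj U)) (mmul d (madj U) (madj G))).
  { rewrite <- !madj_mmul. apply madj_proper. apply HUG. }
  transitivity (mmul d G (mmul d U (mmul d M (mmul d (madj U) (madj G))))).
  - transitivity (mmul d U (mmul d (mmul d G M) (mmul d (madj G) (madj U)))).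
    { rewrite mmul_assoc. apply mmul_proper. reflexivity. apply mmul_assoc. }
    rewrite AdjUG. rewrite mmul_assoc. rewrite <- mmul_assoc. rewrite HUG. apply mmul_assoc.
  - symmetry. rewrite mmul_assoc. apply mmul_proper. reflexivity.
    rewrite mmul_assoc. apply mmul_assoc.
Qed.

Lemma covariance dS dW dB HS HW HB gammaS sigmaW gammaB U rho P beta t Ut (T : Mat -> Mat) :
  hermitian dS HS -> hermitian dW HW -> hermitian dB HB ->
  is_gibbs dS beta HS gammaS -> is_gibbs dB beta HB gammaB ->
  commutes dW sigmaW HW -> commutes dW P HW ->
  commutes (dS * dW * dB) U (madd (kron dB (madd (kron dW HS mI) (kron dW mI HW)) mI) (kron dB mI HB)) ->
  (forall rho, meq (dS * dW) (T rho)
     (ptrace2 dB (mmul (dS * dW * dB) (mmul (dS * dW * dB) U (kron dB rho gammaB)) (madj U)))) ->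
  meq (dS * dW) (T (kron dW rho P)) (kron dW gammaS sigmaW) ->
  is_mexp dS (mscale (mkC 0 (- t)) HS) Ut ->
  meq (dS * dW) (T (kron dW (mmul dS (mmul dS Ut rho) (madj Ut)) P)) (kron dW gammaS sigmaW).
Proof.
  intros HHS HHW HHB HgS HgB HsW HPW HU Tdef HT0 HUt.
  set (z := mkC 0 (- t)).
  destruct (mexp_exists dW (mscale z HW)) as [Wt HWt].
  destruct (mexp_exists dB (mscale z HB)) as [Bt HBt].
  set (V := kron dW Ut Wt).
  set (G := kron dB V Bt).
  set (N := (dS * dW * dB)%nat).
  assert (HV : is_mexp (dS * dW) (madd (kron dW (mscale z HS) mI) (kron dW mI (mscale z HW))) V)
    by (apply mexp_kron_sum; auto).
  assert (HG : is_mexp N (mscale z (madd (kron dB (madd (kron dW HS mI) (kron dW mI HW)) mI) (kron dB mI HB))) G).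
  { eapply is_mexp_proper. 3: apply (mexp_kron_sum (dS * dW) dB); eauto.
    - apply meq_refl_eq; intros. unfold mscale, madd, kron. ring.
    - reflexivity. }
  assert (HUG : commutes N U G).
  { eapply exp_commute. 2: apply HG. apply commutes_scale. apply HU. }
  pose proof (mexp_unitary _ _ _ _ HHS HUt) as UUt.
  pose proof (mexp_unitary _ _ _ _ HHW HWt) as UWt.
  pose proof (mexp_unitary _ _ _ _ HHB HBt) as UBt.
  assert (CgS : commutes dS gammaS Ut) by (eapply gibbs_commute; eauto).
  assert (CgB : commutes dB gammaB Bt) by (eapply gibbs_commute; eauto).
  assert (CsW : commutes dW sigmaW Wt).
  { apply (exp_commute dW (mscale z HW) sigmaW Wt); auto. apply commutes_scale; auto. }
  assert (CPW : commutes dW P Wt).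
  { apply (exp_commute dW (mscale z HW) P Wt); auto. apply commutes_scale; auto. }
  assert (K : meq N (kron dB (kron dW (mmul dS (mmul dS Ut rho) (madj Ut)) P) gammaB)
                    (mmul N (mmul N G (kron dB (kron dW rho P) gammaB)) (madj G))).
  { unfold N, G. rewrite kron_mixed, kron_madj', kron_mixed.
    apply kron_proper.
    - unfold V. rewrite kron_mixed, kron_madj', kron_mixed. apply kron_proper. reflexivity.
      symmetry. apply unitary_conj_inv; auto.
    - symmetry. apply unitary_conj_inv; auto. }
  rewrite Tdef. fold N.
  transitivity (ptrace2 dB (mmul N (mmul N G (mmul N (mmul N U (kron dB (kron dW rho P) gammaB)) (madj U))) (madj G))).
  { apply ptrace_proper. fold N. rewrite K. apply conj_swap. auto. }
  unfold G, N. rewrite ptrace_conj by (apply UBt).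
  rewrite <- Tdef, HT0. unfold V.
  rewrite kron_mixed, kron_madj', kron_mixed. apply kron_proper.
  - apply unitary_conj_inv; auto.
  - apply unitary_conj_inv; auto.
Qed.

Lemma F_lin dS dW dB U P gammaB i j (Xf : R -> Mat) Y :
  (forall a b, (a < dS)%nat -> (b < dS)%nat -> ctacv (fun t => Xf t a b) (Y a b)) ->
  ctacv (fun t => ptrace2 dB (mmul (dS * dW * dB) (mmul (dS * dW * dB) U (kron dB (kron dW (Xf t) P) gammaB)) (madj U)) i j)
        (ptrace2 dB (mmul (dS * dW * dB) (mmul (dS * dW * dB) U (kron dB (kron dW Y P) gammaB)) (madj U)) i j).
Proof.
  intros HX. unfold ptrace2, mmul, kron.
  apply ctacv_csum; intros k Hk. apply ctacv_csum; intros q Hq. apply ctacv_mulr.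
  apply ctacv_csum; intros p Hp. apply ctacv_mull. apply ctacv_mulr. apply ctacv_mulr.
  apply HX; repeat eapply div_lt; eauto.
Qed.

Theorem mainTheorem12 :
  forall (dS dW : nat) (beta : R) (HS HW gammaS rhoS sigmaW : Mat) (v0 : Vec)
         (T : Mat -> Mat),
    (0 < dS)%nat -> (0 < dW)%nat -> 0 < beta ->
    hermitian dS HS -> hermitian dW HW ->
    is_gibbs dS beta HS gammaS ->
    (* |0>_W is a normalized eigenvector of H_W *)
    re (csum dW (fun i => Cmul (Cconj (v0 i)) (v0 i))) = 1 ->
    (exists lam : Cplx, forall i, (i < dW)%nat -> mapply dW HW v0 i = Cmul lam (v0 i)) ->
    density dS rhoS ->
    density dW sigmaW -> commutes dW sigmaW HW ->
    thermal_op (dS * dW) (madd (kron dW HS mI) (kron dW mI HW)) beta T ->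
    meq (dS * dW) (T (kron dW rhoS (proj v0))) (kron dW gammaS sigmaW) ->
    forall DrhoS : Mat, is_dephased dS HS rhoS DrhoS ->
    meq (dS * dW) (T (kron dW DrhoS (proj v0))) (kron dW gammaS sigmaW).
Proof.
  intros dS dW beta HS HW gammaS rhoS sigmaW v0 T HdS HdW Hbeta HHS HHW HgS Hnorm [lam Hev]
    _ _ HsW Hth HT0 DrhoS [Ut [HUt Hcv]].
  destruct Hth as [dB [HB [gammaB [U [HdB [HHB [HgB [_ [HUc Tdef]]]]]]]]].
  assert (HPW : commutes dW (proj v0) HW) by (eapply proj_commute; eauto).
  intros i j Hi Hj. rewrite (Tdef _ i j Hi Hj).
  set (F := fun X => ptrace2 dB (mmul (dS * dW * dB) (mmul (dS * dW * dB) U (kron dB (kron dW X (proj v0)) gammaB)) (madj U)) i j).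
  change (F DrhoS = kron dW gammaS sigmaW i j).
  assert (Hcov : forall t, F (mmul dS (mmul dS (Ut t) rhoS) (madj (Ut t))) = kron dW gammaS sigmaW i j).
  { intros t. unfold F. rewrite <- (Tdef _ i j Hi Hj).
    apply (covariance dS dW dB HS HW HB gammaS sigmaW gammaB U rhoS (proj v0) beta t (Ut t) T); auto. }
  apply (ctacv_unique (fun t => F (mmul dS (mmul dS (Ut t) rhoS) (madj (Ut t))))).
  - unfold F. apply F_lin. intros a b Ha Hb. apply Hcv; auto.
  - eapply ctacv_ext. 2: apply ctacv_const. intros; rewrite Hcov; auto.
Qed.
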